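(* Let $m\geq 7$ and let $\mathfrak{X}=\{A_0,A_1,A_2\}$ be a non-symmetric class $2$ association scheme of order $m$ (so $A_0=I_m$ and $A_2=A_1^T$). Let $B_1$ be the $(2m+1)\times(2m+1)$ matrix defined from $A_1$ as in the context below, let $B_0=I_{2m+1}$ and $B_2=B_1^T$. Then $\mathfrak{Y}=\{B_0,B_1,B_2\}$ is a non-symmetric class $2$ association scheme of order $2m+1$, the automorphism group $\operatorname{Aut}(\mathfrak{Y})$ is intransitive on $\{1,\dots,2m+1\}$, and hence $\mathfrak{Y}$ is non-schurian. Moreover, $\operatorname{Aut}(\mathfrak{Y})\cong\operatorname{Aut}(\mathfrak{X})$.
   Context: An association scheme of order $N$ is a set $\{A_0,\dots,A_d\}$ of $N\times N$ $0/1$-matrices such that $A_0=I_N$, $\sum_i A_i=J_N$ (all-ones matrix), each $A_i^T$ is in the set, and each product $A_iA_j$ is a linear combination of the $A_k$; $d$ is its class. It is non-symmetric of class $2$ if $d=2$ and $A_1^T=A_2\neq A_1$. The automorphism group of $\{A_0,\dots,A_d\}$ is $\{\sigma\in S_N : P_\sigma^TA_iP_\sigma=A_i \text{ for all } i\}$, where $P_\sigma$ is the permutation matrix of $\sigma$. A scheme is schurian if it arises as the set of adjacency matrices of the orbitals (orbits on pairs $(x,y)$ under $(x,y)^g=(x^g,y^g)$) of a transitive permutation group on $\{1,\dots,N\}$. Definition of $B_1$ (with $n=m+1$, indices $1\le i,j\le n-1$): $(B_1)_{i,j}=(A_1)_{ij}$, $(B_1)_{i,n}=0$, $(B_1)_{i,n+j}=(A_0+A_1)_{ij}$;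 $(B_1)_{n,j}=1$, $(B_1)_{n,n}=0$, $(B_1)_{n,n+j}=0$; $(B_1)_{n+i,j}=(A_1)_{ij}$, $(B_1)_{n+i,n}=1$, $(B_1)_{n+i,n+j}=(A_2)_{ij}$. In block form, $B_1=\begin{bmatrix} A_1 & \mathbf{0} & A_0+A_1\\ \mathbf{1}^T & 0 & \mathbf{0}^T\\ A_1 & \mathbf{1} & A_2\end{bmatrix}$ with blocks indexed by $\{1,\dots,n-1\},\{n\},\{n+1,\dots,2n-1\}$. *)

(* Defs.v *)
From mathcomp Require Import all_boot all_order all_algebra all_fingroup.
Set Implicit Arguments. Unset Strict Implicit. Unset Printing Implicit Defensive.
Import GRing.Theory.
Local Open Scope ring_scope.

Definition is01 (N : nat) (A : 'M[int]_N) := forall i j, A i j = 0 \/ A i j = 1.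

Definition is_assoc_scheme (N d : nat) (A : 'I_d.+1 -> 'M[int]_N) : Prop :=
  (forall i, is01 (A i)) /\
  (forall i, A i != 0) /\
  (forall i j, i != j -> A i != A j) /\
  A ord0 = 1%:M /\
  \sum_(i < d.+1) A i = const_mx 1 /\
  (forall i, exists j, (A i)^T = A j) /\
  (forall i j, exists c : 'I_d.+1 -> int, A i *m A j = \sum_k c k *: A k).

Definition fam3 (N : nat) (A0 A1 A2 : 'M[int]_N) : 'I_3 -> 'M[int]_N :=
  fun i => match val i with 0%N => A0 | 1%N => A1 | _ => A2 end.

Definition nonsym_class2 (N : nat) (A0 A1 A2 : 'M[int]_N) : Prop :=
  [/\ is_assoc_scheme (fam3 A0 A1 A2), A1^T = A2 & A2 != A1].

Definition AutS (N d : nat) (A : 'I_d.+1 -> 'M[int]_N) : {set {perm 'I_N}} :=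
  [set s | [forall i, (perm_mx s)^T *m A i *m perm_mx s == A i]].

Definition transitive_on_points (N : nat) (G : {set {perm 'I_N}}) : Prop :=
  forall x y : 'I_N, exists2 g, g \in G & g x = y.

Definition orbital_mx (N : nat) (G : {set {perm 'I_N}}) (x y : 'I_N) : 'M[int]_N :=
  \matrix_(u, v) ((u, v) \in [set ((g : {perm 'I_N}) x, g y) | g in G])%:R.

Definition schurian (N d : nat) (A : 'I_d.+1 -> 'M[int]_N) : Prop :=
  exists G : {group {perm 'I_N}},
    [/\ transitive_on_points G,
        forall i, exists x y, A i = orbital_mx G x y &
        forall x y, exists i, orbital_mx G x y = A i].

Definition ent (m : nat) (A : 'M[int]_m) (i j : nat) : int :=
  match @insub _ (fun k => k < m)%N 'I_m i, @insub _ (fun k => k < m)%N 'I_m j with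
  | Some i', Some j' => A i' j'
  | _, _ => 0
  end.

(* B_1 of size 2m+1 = 2n-1 (n = m+1), 0-based indices: block {0..m-1},
   the point m (the paper's n), block {m+1..2m}. *)
Definition B1 (m : nat) (A0 A1 A2 : 'M[int]_m) : 'M[int]_(2 * m + 1) :=
  \matrix_(i, j)
    if (i < m)%N then
      (if (j < m)%N then ent A1 i j
       else if j == m :> nat then 0 else ent (A0 + A1) i (j - m.+1))
    else if i == m :> nat then
      (if (j < m)%N then 1 else 0)
    else
      (if (j < m)%N then ent A1 (i - m.+1) j
       else if j == m :> nat then 1 else ent A2 (i - m.+1) (j - m.+1)).

(* Main.v *)
Require Import Defs.
From mathcomp Require Import all_boot all_order all_algebra all_fingroup.
From mathcomp Require Import zify ring lra.
Set Implicit Arguments. Unset Strict Implicit. Unset Printing Implicit Defensive.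
Import GRing.Theory Num.Theory.
Local Open Scope ring_scope.

Lemma fam3_sum N (X0 X1 X2 : 'M[int]_N) (c : 'I_3 -> int) :
  \sum_k c k *: fam3 X0 X1 X2 k = c ord0 *: X0 + c (inord 1) *: X1 + c (inord 2) *: X2.
Proof.
rewrite !big_ord_recl big_ord0 addr0 /= addrA.
by congr (c _ *: _ + c _ *: _ + c _ *: _); apply: val_inj; rewrite /= inordK.
Qed.

Lemma fam3_sum1 N (X0 X1 X2 : 'M[int]_N) :
  \sum_k fam3 X0 X1 X2 k = X0 + X1 + X2.
Proof. by rewrite !big_ord_recl big_ord0 addr0 /= addrA. Qed.

Lemma sdl1 m (F : 'I_m -> int) i : \sum_z (i == z)%:R * F z = F i.
Proof. rewrite (bigD1 i) //= eqxx mul1r big1 ?addr0 // => z /negbTE; rewrite eq_sym => ->; by rewrite mul0r. Qed.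
Lemma sdl2 m (F : 'I_m -> int) i : \sum_z (z == i)%:R * F z = F i.
Proof. rewrite -(sdl1 F i); apply: eq_bigr => z _; by rewrite eq_sym. Qed.
Lemma sdr1 m (F : 'I_m -> int) i : \sum_z F z * (i == z)%:R = F i.
Proof. rewrite -(sdl1 F i); apply: eq_bigr => z _; by rewrite mulrC. Qed.
Lemma sdr2 m (F : 'I_m -> int) i : \sum_z F z * (z == i)%:R = F i.
Proof. rewrite -(sdl2 F i); apply: eq_bigr => z _; by rewrite mulrC. Qed.

Record drt m (A : 'M[int]_m) (l : int) : Prop := DRT {
  d01 : forall i j, A i j = 0 \/ A i j = 1;
  dtour : forall i j, A i j + A j i = (i != j)%:R;
  drow : forall i, \sum_j A i j = 2 * l + 1;
  dcol : forall j, \sum_i A i j = 2 * l + 1;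
  dsq : forall i j, \sum_z A i z * A z j = l * A i j + (l + 1) * A j i;
  dl : 1 <= l;
  dm : (m%:R : int) = 4 * l + 3 }.

Lemma sum_ne m (F : 'I_m -> int) x : \sum_z F z * (z != x)%:R = \sum_z F z - F x.
Proof.
rewrite (bigD1 x) //= eqxx mulr0 add0r [X in _ = X - _](bigD1 x) //= addrC addrK.
by apply: eq_bigr => z /negbTE ->; rewrite mulr1.
Qed.

Lemma sum_ne' m (F : 'I_m -> int) x : \sum_z (z != x)%:R * F z = \sum_z F z - F x.
Proof. rewrite -sum_ne; apply: eq_bigr => z _; by rewrite mulrC. Qed.

Lemma sq01 (a : int) : a = 0 \/ a = 1 -> a * a = a.
Proof. by case=> ->. Qed.

Lemma from_scheme m (A0 A1 A2 : 'M[int]_m) :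
  (7 <= m)%N -> nonsym_class2 A0 A1 A2 ->
  [/\ A0 = 1%:M, A2 = A1^T & exists l, drt A1 l].
Proof.
move=> m7 [[H01 [Hnz [Hdist [H0 [Hsum [Htr Hprod]]]]]] HT Hne].
rewrite /fam3 /= in H0; subst A0 A2.
rewrite fam3_sum1 in Hsum.
have Hs : forall i j, (1%:M + A1 + A1^T) i j = 1 by move=> i j; rewrite Hsum mxE.
have A01 : forall i j, A1 i j = 0 \/ A1 i j = 1.
  by move=> i j; have := H01 (inord 1) i j; rewrite /fam3 /= inordK.
have tour : forall i j, A1 i j + A1 j i = (i != j)%:R.
  move=> i j; have := Hs i j.
  rewrite !mxE /=; case: (i == j) => /= h; lia.
have diag0 : forall i, A1 i i = 0.
  by move=> i; have := tour i i; rewrite eqxx /=; lia.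
have prod0 : forall i j, A1 i j * A1 j i = 0.
  move=> i j; have := tour i j; case: (A01 i j) => ->; case: (A01 j i) => -> //=.
  by case: (i != j).
have row : forall i, \sum_j A1 i j = \sum_j A1 i j * A1 i j.
  by move=> i; apply: eq_bigr => j _; rewrite sq01.
have prodE : forall a b, exists c0 c1 c2 : int, forall i j,
    \sum_z fam3 1%:M A1 A1^T a i z * fam3 1%:M A1 A1^T b z j
      = c0 * (i == j)%:R + c1 * A1 i j + c2 * A1 j i.
  move=> a b; have [c Hc] := Hprod a b.
  rewrite fam3_sum in Hc; exists (c ord0), (c (inord 1)), (c (inord 2)) => i j.
  move/matrixP: Hc => /(_ i j); rewrite !mxE => <-.
  by apply: eq_bigr => z _.
have [c0 [c1 [c2 H11]]] := prodE (inord 1) (inord 1).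
have [d0 [d1 [d2 H12]]] := prodE (inord 1) (inord 2).
have [e0 [e1 [e2 H21]]] := prodE (inord 2) (inord 1).
rewrite /fam3 /= !inordK //  in H11 H12 H21.
have rowd : forall i, \sum_j A1 i j = d0.
  move=> i; have := H12 i i; rewrite eqxx diag0 !mulr0 !addr0 mulr1 => <-.
  by rewrite row; apply: eq_bigr => z _; rewrite mxE.
have cold : forall i, \sum_j A1 j i = e0.
  move=> i; have := H21 i i; rewrite eqxx diag0 !mulr0 !addr0 mulr1 => <-.
  by apply: eq_bigr => z _; rewrite mxE sq01.
have m0 : (0 < m)%N by lia.
pose i0 : 'I_m := Ordinal m0.
have m1 : (1 < m)%N by lia.
pose i1 : 'I_m := Ordinal m1.
have de : d0 = e0.
  have : \sum_i \sum_j A1 i j = \sum_j \sum_i A1 i j by rewrite exchange_big.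
  under eq_bigr do rewrite rowd.
  under [X in _ = X]eq_bigr do rewrite cold.
  rewrite !sumr_const card_ord -[d0 *+ _]mulr_natr -[e0 *+ _]mulr_natr => h.
  have hm : (m%:R : int) != 0 by rewrite pnatr_eq0 -lt0n.
  by apply: (mulIf hm).
have mk : (m%:R : int) = 2 * d0 + 1.
  have h : \sum_j (1%:M + A1 + A1^T) i0 j = m%:R.
    by under eq_bigr do rewrite Hs; rewrite sumr_const card_ord.
  rewrite -h; under eq_bigr do rewrite !mxE.
  rewrite !big_split /= rowd cold -de.
  have -> : \sum_(i < m) (i0 == i)%:R = 1 :> int.
    by rewrite -[RHS](sdl1 (fun _ => 1 : int) i0); apply: eq_bigr => z _; rewrite mulr1.
  ring.
have c00 : c0 = 0.
  have := H11 i0 i0; rewrite eqxx diag0 !mulr0 !addr0 mulr1.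
  by rewrite big1 // => z _; rewrite prod0.
have c12 : c2 = c1 + 1.
  have S : forall i j, \sum_z A1 i z * A1 j z = d0 - A1 i j - (c1 * A1 i j + c2 * A1 j i).
    move=> i j.
    have -> : \sum_z A1 i z * A1 j z = \sum_z A1 i z * ((z != j)%:R - A1 z j).
      apply: eq_bigr => z _; congr (_ * _); rewrite eq_sym -(tour j z); ring.
    under eq_bigr do rewrite mulrBr.
    rewrite sumrB sum_ne rowd H11.
    have -> : (i == j) = (val i == val j) by [].
    by rewrite c00 mul0r add0r.
  have := S i0 i1; rewrite (eq_bigr (fun z => A1 i1 z * A1 i0 z)); last by move=> z _; rewrite mulrC.
  rewrite S => h.
  have := tour i0 i1; rewrite /=.
  case: (A01 i0 i1) => f1; case: (A01 i1 i0) => f2; rewrite f1 f2 in h * => //= _; lia.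
have kl : d0 = 2 * c1 + 1.
  have : \sum_j \sum_z A1 i0 z * A1 z j = \sum_j (c1 * A1 i0 j + c2 * A1 j i0).
    apply: eq_bigr => j _; rewrite H11 c00 mul0r add0r; done.
  rewrite exchange_big /=.
  under eq_bigr do rewrite -mulr_sumr rowd.
  rewrite big_split /= -!mulr_sumr rowd cold -de -mulr_suml rowd => h.
  have hd : d0 != 0 by apply/eqP => h0; move: mk; rewrite h0 => /eqP; lia.
  rewrite c12 in h; apply: (mulIf hd); rewrite h; ring.
split => //; exists c1; constructor => //.
- by move=> i; rewrite rowd kl.
- by move=> j; rewrite cold -de kl.
- by move=> i j; rewrite H11 c00 mul0r add0r c12.
- by move: mk; rewrite kl => /eqP; lia.
- by rewrite mk kl; ring.
Qed.

Lemma ent_ok m (A : 'M[int]_m) (i j : 'I_m) : ent A i j = A i j.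
Proof.
rewrite /ent (insubT (fun k => (k < m)%N) (ltn_ord i)) (insubT (fun k => (k < m)%N) (ltn_ord j)).
by congr (A _ _); apply: val_inj.
Qed.

Lemma vX_proof m (i : 'I_m) : (i < 2 * m + 1)%N. Proof. have := ltn_ord i; lia. Qed.
Lemma vI_proof m : (m < 2 * m + 1)%N. Proof. lia. Qed.
Lemma vX'_proof m (i : 'I_m) : (m.+1 + i < 2 * m + 1)%N. Proof. have := ltn_ord i; lia. Qed.

Definition vX m (i : 'I_m) : 'I_(2 * m + 1) := Ordinal (vX_proof i).
Definition vI m : 'I_(2 * m + 1) := Ordinal (vI_proof m).
Definition vX' m (i : 'I_m) : 'I_(2 * m + 1) := Ordinal (vX'_proof i).

Lemma vcase m (u : 'I_(2 * m + 1)) :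
  (exists i, u = vX i) \/ u = vI m \/ (exists i, u = vX' i).
Proof.
case: (ltnP u m) => h1.
  by left; exists (Ordinal h1); apply: val_inj.
case: (eqVneq (nat_of_ord u) m) => h2.
  by right; left; apply: val_inj.
right; right.
have h4 := ltn_ord u.
have h3 : (u - m.+1 < m)%N by lia.
by exists (Ordinal h3); apply: val_inj => /=; lia.
Qed.

Lemma sum_split m (F : 'I_(2 * m + 1) -> int) :
  \sum_u F u = \sum_(i < m) F (vX i) + F (vI m) + \sum_(i < m) F (vX' i).
Proof.
have E : (m + (1 + m) = 2 * m + 1)%N by lia.
rewrite (reindex (cast_ord E)) /=; last first.
  by exists (cast_ord (esym E)) => i _; rewrite ?cast_ordK ?cast_ordKV.
rewrite big_split_ord big_split_ord big_ord1 /= addrA.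
congr (_ + _ + _).
- by apply: eq_bigr => i _; congr F; apply: val_inj.
- by congr F; apply: val_inj => /=; rewrite addn0.
- by apply: eq_bigr => i _; congr F; apply: val_inj => /=; rewrite addnA addn1.
Qed.

Section Ent.
End Ent.

Lemma eXX m (i j : 'I_m) : (vX i == vX j) = (i == j). Proof. by []. Qed.
Lemma eX'X' m (i j : 'I_m) : (vX' i == vX' j) = (i == j).
Proof. by rewrite -val_eqE /= eqn_add2l. Qed.
Lemma eXI m (i : 'I_m) : (vX i == vI m) = false.
Proof. by apply/negbTE; rewrite -val_eqE /= neq_ltn ltn_ord. Qed.
Lemma eIX m (i : 'I_m) : (vI m == vX i) = false.
Proof. by rewrite eq_sym eXI. Qed.
Lemma eXX' m (i j : 'I_m) : (vX i == vX' j) = false.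
Proof. apply/negbTE; rewrite -val_eqE /=; have := ltn_ord i; lia. Qed.
Lemma eX'X m (i j : 'I_m) : (vX' j == vX i) = false.
Proof. by rewrite eq_sym eXX'. Qed.
Lemma eIX' m (i : 'I_m) : (vI m == vX' i) = false.
Proof. apply/negbTE; rewrite -val_eqE /=; lia. Qed.
Lemma eX'I m (i : 'I_m) : (vX' i == vI m) = false.
Proof. by rewrite eq_sym eIX'. Qed.

Lemma YXX m (A0 A1 A2 : 'M[int]_m) i j : B1 A0 A1 A2 (vX i) (vX j) = A1 i j.
Proof. by rewrite mxE /= !ltn_ord ent_ok. Qed.
Lemma YXI m (A0 A1 A2 : 'M[int]_m) i : B1 A0 A1 A2 (vX i) (vI m) = 0.
Proof. by rewrite mxE /= ltn_ord ltnn eqxx. Qed.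
Lemma YXX' m (A0 A1 A2 : 'M[int]_m) i j : B1 A0 A1 A2 (vX i) (vX' j) = (A0 + A1) i j.
Proof.
rewrite mxE /= ltn_ord.
have -> : (m.+1 + j < m)%N = false by lia.
have -> : (m.+1 + j == m) = false by lia.
by rewrite addKn ent_ok.
Qed.
Lemma YIX m (A0 A1 A2 : 'M[int]_m) j : B1 A0 A1 A2 (vI m) (vX j) = 1.
Proof. by rewrite mxE /= ltnn eqxx ltn_ord. Qed.
Lemma YII m (A0 A1 A2 : 'M[int]_m) : B1 A0 A1 A2 (vI m) (vI m) = 0.
Proof. by rewrite mxE /= ltnn eqxx. Qed.
Lemma YIX' m (A0 A1 A2 : 'M[int]_m) j : B1 A0 A1 A2 (vI m) (vX' j) = 0.
Proof.
rewrite mxE /= ltnn eqxx.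
by have -> : (m.+1 + j < m)%N = false by lia.
Qed.
Lemma YX'X m (A0 A1 A2 : 'M[int]_m) i j : B1 A0 A1 A2 (vX' i) (vX j) = A1 i j.
Proof.
rewrite mxE /= ltn_ord.
have -> : (m.+1 + i < m)%N = false by lia.
have -> : (m.+1 + i == m) = false by lia.
by rewrite addKn ent_ok.
Qed.
Lemma YX'I m (A0 A1 A2 : 'M[int]_m) i : B1 A0 A1 A2 (vX' i) (vI m) = 1.
Proof.
rewrite mxE /= ltnn eqxx.
have -> : (m.+1 + i < m)%N = false by lia.
by have -> : (m.+1 + i == m) = false by lia.
Qed.
Lemma YX'X' m (A0 A1 A2 : 'M[int]_m) i j : B1 A0 A1 A2 (vX' i) (vX' j) = A2 i j.
Proof.
rewrite mxE /=.
have -> : (m.+1 + i < m)%N = false by lia.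
have -> : (m.+1 + i == m) = false by lia.
have -> : (m.+1 + j < m)%N = false by lia.
have -> : (m.+1 + j == m) = false by lia.
by rewrite !addKn ent_ok.
Qed.

Lemma s_r0 m (F : 'I_m -> int) : \sum_z F z * 0 = 0.
Proof. by rewrite big1 // => z _; rewrite mulr0. Qed.
Lemma s_l0 m (F : 'I_m -> int) : \sum_z 0 * F z = 0.
Proof. by rewrite big1 // => z _; rewrite mul0r. Qed.
Lemma s_r1 m (F : 'I_m -> int) : \sum_z F z * 1 = \sum_z F z.
Proof. by apply: eq_bigr => z _; rewrite mulr1. Qed.
Lemma s_l1 m (F : 'I_m -> int) : \sum_z 1 * F z = \sum_z F z.
Proof. by apply: eq_bigr => z _; rewrite mul1r. Qed.

Lemma sdel1 m (i : 'I_m) : \sum_z (i == z)%:R = 1 :> int.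
Proof. by rewrite -[RHS](sdl1 (fun _ => 1 : int) i); apply: eq_bigr => z _; rewrite mulr1. Qed.
Lemma sdel2 m (i : 'I_m) : \sum_z (z == i)%:R = 1 :> int.
Proof. by rewrite -[RHS](sdl2 (fun _ => 1 : int) i); apply: eq_bigr => z _; rewrite mulr1. Qed.

Section DRT.
Variables (m : nat) (A : 'M[int]_m) (l : int).
Hypothesis HA : drt A l.

Lemma d00 i : A i i = 0.
Proof. have := dtour HA i i; rewrite eqxx /=; lia. Qed.

Lemma dxor i j : A i j * A j i = 0.
Proof.
have := dtour HA i j; case: (d01 HA i j) => ->; case: (d01 HA j i) => -> //=.
by case: (i != j).
Qed.

Lemma dother i j : A j i = (i != j)%:R - A i j.
Proof. rewrite -(dtour HA i j); ring. Qed.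

Lemma sym1 i j : \sum_z A i z * A j z = 2 * l + 1 - (l + 1) * (A i j + A j i).
Proof.
have -> : \sum_z A i z * A j z = \sum_z A i z * ((z != j)%:R - A z j).
  by apply: eq_bigr => z _; rewrite (dother z j).
under eq_bigr do rewrite mulrBr.
rewrite sumrB sum_ne (drow HA) (dsq HA); ring.
Qed.

Lemma sym2 i j : \sum_z A z i * A z j = 2 * l + 1 - (l + 1) * (A i j + A j i).
Proof.
have -> : \sum_z A z i * A z j = \sum_z ((z != i)%:R - A i z) * A z j.
  by apply: eq_bigr => z _; rewrite (dother i z) eq_sym.
under eq_bigr do rewrite mulrBl.
rewrite sumrB sum_ne' (dcol HA) (dsq HA); ring.
Qed.

Lemma sqswap i j : \sum_z A z i * A j z = l * A j i + (l + 1) * A i j.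
Proof. rewrite -(dsq HA); apply: eq_bigr => z _; by rewrite mulrC. Qed.

Local Notation Y := (B1 1%:M A A^T).

Lemma YXX'e i j : Y (vX i) (vX' j) = (i == j)%:R + A i j.
Proof. by rewrite YXX' !mxE. Qed.
Lemma YX'X'e i j : Y (vX' i) (vX' j) = A j i.
Proof. by rewrite YX'X' !mxE. Qed.

Lemma Ysq u v : (Y *m Y) u v = (2 * l + 1) * Y u v + (2 * l + 2) * Y v u.
Proof.
rewrite mxE sum_split.
case: (vcase u) => [[i ->]|[->|[i ->]]]; case: (vcase v) => [[j ->]|[->|[j ->]]];
rewrite ?(YXX, YXI, YXX'e, YIX, YII, YIX', YX'X, YX'I, YX'X'e);
under eq_bigr do rewrite ?(YXX, YXI, YXX'e, YIX, YII, YIX', YX'X, YX'I, YX'X'e);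
under [X in _ + _ + X]eq_bigr do rewrite ?(YXX, YXI, YXX'e, YIX, YII, YIX', YX'X, YX'I, YX'X'e);
rewrite ?mulr0 ?mul0r ?mulr1 ?mul1r ?big1_eq ?addr0 ?add0r //.
all: try (under eq_bigr do rewrite ?mulrDl ?mulrDr); try (under [X in _ + X]eq_bigr do rewrite ?mulrDl ?mulrDr).
all: rewrite ?big_split /= ?s_r0 ?s_l0 ?s_r1 ?s_l1 ?sqswap ?sdel1 ?sdel2 ?sdl1 ?sdl2 ?sdr1 ?sdr2 ?(drow HA) ?(dcol HA) ?(dsq HA) ?sym1 ?sym2.
all: try (case: (eqVneq i j) => [<-|hij];
  [ rewrite ?eqxx ?d00 /=; lia
  | have := dtour HA i j; rewrite hij ?(negbTE hij) ?(eq_sym j i) ?(negbTE hij) /=;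
    case: (d01 HA i j) => ->; case: (d01 HA j i) => -> /=; lia ]).
all: rewrite ?addr0 ?add0r; try lia.
Qed.


Lemma Y01 u v : Y u v = 0 \/ Y u v = 1.
Proof.
case: (vcase u) => [[i ->]|[->|[i ->]]]; case: (vcase v) => [[j ->]|[->|[j ->]]];
rewrite ?(YXX, YXI, YXX'e, YIX, YII, YIX', YX'X, YX'I, YX'X'e); try (by left); try (by right);
try exact: (d01 HA).
case: (eqVneq i j) => [<-|hij]; first by rewrite d00 /=; right.
by rewrite add0r; exact: (d01 HA).
Qed.

Lemma Ytour u v : Y u v + Y v u = (u != v)%:R.
Proof.
case: (vcase u) => [[i ->]|[->|[i ->]]]; case: (vcase v) => [[j ->]|[->|[j ->]]];
rewrite ?(YXX, YXI, YXX'e, YIX, YII, YIX', YX'X, YX'I, YX'X'e)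
  ?(eXX, eX'X', eXI, eIX, eXX', eX'X, eIX', eX'I) ?eqxx //=.
- exact: (dtour HA).
- have := dtour HA i j; case: (eqVneq i j) => [<-|hij].
    by rewrite d00.
  rewrite /=; lia.
- have := dtour HA j i; case: (eqVneq i j) => [<-|hij].
    by rewrite d00.
  rewrite /=; lia.
- by rewrite addrC (dtour HA) eq_sym.
Qed.

Lemma Yrow u : \sum_w Y u w = 4 * l + 3.
Proof.
rewrite sum_split.
case: (vcase u) => [[i ->]|[->|[i ->]]];
under eq_bigr do rewrite ?(YXX, YXI, YXX'e, YIX, YII, YIX', YX'X, YX'I, YX'X'e);
rewrite ?(YXX, YXI, YXX'e, YIX, YII, YIX', YX'X, YX'I, YX'X'e);
under [X in _ + _ + X]eq_bigr do rewrite ?(YXX, YXI, YXX'e, YIX, YII, YIX', YX'X, YX'I, YX'X'e);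
rewrite ?big_split /= ?sdel1 ?sdel2 ?(drow HA) ?(dcol HA) ?big1_eq ?sumr_const ?card_ord ?(dm HA); lia.
Qed.

Lemma Ycol u : \sum_w Y w u = 4 * l + 3.
Proof.
rewrite sum_split.
case: (vcase u) => [[i ->]|[->|[i ->]]];
under eq_bigr do rewrite ?(YXX, YXI, YXX'e, YIX, YII, YIX', YX'X, YX'I, YX'X'e);
rewrite ?(YXX, YXI, YXX'e, YIX, YII, YIX', YX'X, YX'I, YX'X'e);
under [X in _ + _ + X]eq_bigr do rewrite ?(YXX, YXI, YXX'e, YIX, YII, YIX', YX'X, YX'I, YX'X'e);
rewrite ?big_split /= ?sdel1 ?sdel2 ?(drow HA) ?(dcol HA) ?big1_eq ?sumr_const ?card_ord ?(dm HA); lia.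
Qed.

End DRT.


Definition o1 : 'I_3 := @Ordinal 3 1 isT.
Definition o2 : 'I_3 := @Ordinal 3 2 isT.

Lemma I3_case (i : 'I_3) : i = ord0 \/ i = o1 \/ i = o2.
Proof.
case: i => [[|[|[|n]]] Hi].
- by left; apply: val_inj.
- by right; left; apply: val_inj.
- by right; right; apply: val_inj.
- by [].
Qed.

Section TourScheme.
Variables (N : nat) (Y : 'M[int]_N) (k a b : int).
Hypothesis T01 : forall u v, Y u v = 0 \/ Y u v = 1.
Hypothesis Ttour : forall u v, Y u v + Y v u = (u != v)%:R.
Hypothesis Trow : forall u, \sum_w Y u w = k.
Hypothesis Tcol : forall u, \sum_w Y w u = k.
Hypothesis Tsq : forall u v, (Y *m Y) u v = a * Y u v + b * Y v u.
Variables u0 v0 : 'I_N.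
Hypothesis Twit : Y u0 v0 = 1.

Definition inspan (M : 'M[int]_N) :=
  exists c0 c1 c2 : int, forall u v, M u v = c0 * (u == v)%:R + c1 * Y u v + c2 * Y v u.

Lemma Tdiag u : Y u u = 0.
Proof. have := Ttour u u; rewrite eqxx /=; lia. Qed.

Lemma Tdelta u v : (u == v)%:R + Y u v + Y v u = 1.
Proof. rewrite -addrA Ttour; by case: (u == v). Qed.

Lemma inspan_ok M : inspan M ->
  exists c : 'I_3 -> int, M = \sum_k c k *: fam3 1%:M Y Y^T k.
Proof.
case=> c0 [c1 [c2 H]].
exists (fun i : 'I_3 => if val i == 0%N then c0 else if val i == 1%N then c1 else c2).
rewrite fam3_sum; apply/matrixP => u v; rewrite H !mxE /= inordK // inordK //.
Qed.

Lemma sp1 : inspan 1%:M.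
Proof. by exists 1, 0, 0 => u v; rewrite mxE; ring. Qed.
Lemma spY : inspan Y.
Proof. by exists 0, 1, 0 => u v; ring. Qed.
Lemma spYT : inspan Y^T.
Proof. by exists 0, 0, 1 => u v; rewrite mxE; ring. Qed.

Lemma dother' u w : Y w u = (u != w)%:R - Y u w.
Proof. rewrite -(Ttour u w); ring. Qed.

Lemma spYY : inspan (Y *m Y).
Proof. by exists 0, a, b => u v; rewrite Tsq; ring. Qed.

Lemma spYYT : inspan (Y *m Y^T).
Proof.
exists k, (k - 1 - a), (k - b) => u v.
rewrite mxE.
have -> : \sum_w Y u w * Y^T w v = \sum_w Y u w * ((w != v)%:R - Y w v).
  by apply: eq_bigr => w _; rewrite mxE (dother' w v).
under eq_bigr do rewrite mulrBr.
rewrite sumrB sum_ne Trow.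
have := Tsq u v; rewrite mxE => ->.
have := Tdelta u v; lia.
Qed.

Lemma spYTY : inspan (Y^T *m Y).
Proof.
exists k, (k - 1 - a), (k - b) => u v.
rewrite mxE.
have -> : \sum_w Y^T u w * Y w v = \sum_w ((w != u)%:R - Y u w) * Y w v.
  by apply: eq_bigr => w _; rewrite mxE (dother' u w) eq_sym.
under eq_bigr do rewrite mulrBl.
rewrite sumrB sum_ne' Tcol.
have := Tsq u v; rewrite mxE => ->.
have := Tdelta u v; lia.
Qed.

Lemma spYTYT : inspan (Y^T *m Y^T).
Proof.
exists 0, b, a => u v.
rewrite -trmx_mul mxE Tsq; ring.
Qed.

Lemma tour_scheme : nonsym_class2 1%:M Y Y^T.
Proof.
have Yvu : Y v0 u0 = 0.
  have := Ttour u0 v0; rewrite Twit.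
  case: (eqVneq u0 v0) => [e|_]; last by rewrite /=; lia.
  by move: Twit; rewrite e Tdiag.
have n1Y : forall M : 'M[int]_N, M u0 u0 = 0 -> 1%:M != M.
  by move=> M h; apply/eqP => /matrixP /(_ u0 u0); rewrite h mxE eqxx.
have nY : forall M : 'M[int]_N, M u0 v0 = 1 -> M v0 u0 = 0 -> Y != M -> True by [].
have hYYT : Y^T != Y.
  by apply/eqP => /matrixP /(_ u0 v0); rewrite mxE Twit Yvu.
split => //.
split; [|split; [|split; [|split; [|split; [|split]]]]].
- move=> i; case: (I3_case i) => [->|[->|->]] /= u v; rewrite ?mxE //.
  by case: (u == v); [right|left].
- move=> i; case: (I3_case i) => [->|[->|->]] /=; apply/eqP => /matrixP.
  + by move=> /(_ u0 u0); rewrite !mxE eqxx.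
  + by move=> /(_ u0 v0); rewrite !mxE Twit.
  + by move=> /(_ v0 u0); rewrite !mxE Twit.
- move=> i j; case: (I3_case i) => [->|[->|->]]; case: (I3_case j) => [->|[->|->]] //= _.
  + by apply: n1Y; rewrite Tdiag.
  + by apply: n1Y; rewrite mxE Tdiag.
  + by rewrite eq_sym; apply: n1Y; rewrite Tdiag.
  + by rewrite eq_sym.
  + by rewrite eq_sym; apply: n1Y; rewrite mxE Tdiag.
- by [].
- rewrite fam3_sum1; apply/matrixP => u v; rewrite !mxE; exact: Tdelta.
- move=> i; case: (I3_case i) => [->|[->|->]] /=.
  + by exists ord0; rewrite tr_scalar_mx.
  + by exists o2.
  + by exists o1; rewrite trmxK.
- move=> i j; apply: inspan_ok.
  case: (I3_case i) => [->|[->|->]]; case: (I3_case j) => [->|[->|->]] /=;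
  rewrite ?mul1mx ?mulmx1;
  by [exact: sp1 | exact: spY | exact: spYT | exact: spYY | exact: spYYT | exact: spYTY | exact: spYTYT].
Qed.

End TourScheme.


Lemma conj_perm_entry N (s : {perm 'I_N}) (M : 'M[int]_N) u v :
  ((perm_mx s)^T *m M *m perm_mx s) u v = M ((s^-1)%g u) ((s^-1)%g v).
Proof.
rewrite tr_perm_mx -row_permE.
have -> : perm_mx s = perm_mx ((s^-1)^-1)%g by rewrite invgK.
by rewrite -col_permE !mxE.
Qed.

Lemma inAutS N d (F : 'I_d.+1 -> 'M[int]_N) (s : {perm 'I_N}) :
  reflect (forall i u v, F i (s u) (s v) = F i u v) (s \in AutS F).
Proof.
rewrite inE; apply: (iffP forallP) => H.
- move=> i u v; have /eqP/matrixP/(_ (s u) (s v)) := H i.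
  by rewrite conj_perm_entry !permK.
- move=> i; apply/eqP/matrixP => u v; rewrite conj_perm_entry.
  by rewrite -{2}(permKV s u) -{2}(permKV s v) H.
Qed.

Lemma inAut3 N (M : 'M[int]_N) (s : {perm 'I_N}) :
  reflect (forall u v, M (s u) (s v) = M u v) (s \in AutS (fam3 1%:M M M^T)).
Proof.
apply: (iffP (inAutS _ _)) => H.
- by move=> u v; have := H o1 u v.
- move=> i u v; case: (I3_case i) => [->|[->|->]] /=; rewrite ?mxE ?H //.
  by rewrite (inj_eq perm_inj).
Qed.

Lemma AutS_group N d (F : 'I_d.+1 -> 'M[int]_N) : group_set (AutS F).
Proof.
apply/group_setP; split.
- by apply/inAutS => i u v; rewrite !perm1.
- move=> x y /inAutS Hx /inAutS Hy; apply/inAutS => i u v.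
  by rewrite !permM Hy Hx.
Qed.


Lemma ex_nz m (F : 'I_m -> int) : \sum_z F z != 0 -> exists z, F z != 0.
Proof.
move=> h; apply/existsP; apply: contraR h => /existsPn H.
by rewrite big1 // => z _; have := H z; rewrite negbK => /eqP.
Qed.

Section Inv.
Variables (m : nat) (A : 'M[int]_m) (l : int).
Hypothesis HA : drt A l.
Local Notation Y := (B1 1%:M A A^T).

Lemma one01 (a : int) : a = 0 \/ a = 1 -> a != 0 -> a = 1.
Proof. by case=> ->. Qed.

Lemma prod1 x y z w : A x y * A z w != 0 -> A x y = 1 /\ A z w = 1.
Proof. by case: (d01 HA x y) => ->; case: (d01 HA z w) => ->. Qed.

Lemma ex_out x : exists y, A x y = 1.
Proof.
have [y hy] : exists y, A x y != 0.
  by apply: ex_nz; rewrite (drow HA); have := dl HA; lia.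
by exists y; apply: one01 => //; exact: (d01 HA).
Qed.

Lemma ex_common x y : A x y = 1 -> exists z, A x z = 1 /\ A y z = 1.
Proof.
move=> hxy.
have [z hz] : exists z, A x z * A y z != 0.
  apply: ex_nz; rewrite (sym1 HA) hxy.
  have := dxor HA x y; rewrite hxy mul1r => ->; have := dl HA; lia.
by exists z; apply: prod1.
Qed.

Lemma ex_path w x y : A w x = 1 -> A x y = 1 -> A y w = 1 ->
  exists z, z != x /\ A w z = 1 /\ A z y = 1.
Proof.
move=> h1 h2 h3.
have hwy : A w y = 0 by rewrite -[RHS](dxor HA y w) h3 mul1r.
have [z hz] : exists z, (z != x)%:R * (A w z * A z y) != 0.
  apply: ex_nz; rewrite (sum_ne' (fun z => A w z * A z y)) (dsq HA) h1 h2 hwy h3.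
  have := dl HA; lia.
exists z; move: hz; case: (z != x) => //=; rewrite ?mul0r ?mulr1n ?mul1r ?eqxx // => /prod1 [-> ->].
by [].
Qed.

Lemma neq_of x y : A x y = 1 -> x != y.
Proof. by move=> h; apply/eqP => e; move: h; rewrite e (d00 HA). Qed.

Definition Pv (v : 'I_(2 * m + 1)) :=
  forall a, Y v a = 1 -> exists b, Y b v = 1 /\ forall c, Y v c = 1 -> Y a c = Y b c.

Ltac Ys := rewrite ?(YXX, YXI, YXX'e, YIX, YII, YIX', YX'X, YX'I, YX'X'e).

Lemma P_inf : Pv (vI m).
Proof.
move=> a; case: (vcase a) => [[i ->]|[->|[i ->]]]; Ys => // _.
exists (vX' i); split; first by Ys.
move=> c; case: (vcase c) => [[j ->]|[->|[j ->]]]; by Ys.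
Qed.

Lemma P_only v : Pv v -> v = vI m.
Proof.
case: (vcase v) => [[x ->]|[->|[x ->]]] // P.
- have [y hxy] := ex_out x.
  have hy1 : Y (vX x) (vX y) = 1 by Ys.
  have [b [hb hc]] := P (vX y) hy1.
  have nxy := neq_of hxy.
  have c1 : Y (vX y) (vX' y) = 1 by Ys; rewrite eqxx (d00 HA).
  have o1 : Y (vX x) (vX' y) = 1 by Ys; rewrite (negbTE nxy) hxy.
  case: (vcase b) hb hc => [[w ->]|[->|[w ->]]]; Ys => hb hc.
  + have := hc _ o1; rewrite c1; Ys => h.
    case: (eqVneq w y) => [ewy|nwy].
      by move: hb; rewrite ewy; have := dxor HA x y; rewrite hxy mul1r => ->.
    rewrite (negbTE nwy) add0r in h.
    by have := hc (vX y); Ys; rewrite hxy (d00 HA) -h => /(_ erefl).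
  + by have := hc _ o1; rewrite c1; Ys.
  + have := hc (vX y); Ys; rewrite hxy (d00 HA) => /(_ erefl) hwy.
    have hyw : A y w = 1.
      have := dtour HA y w; rewrite -hwy addr0.
      case: (eqVneq y w) => [eyw|//].
      by move: hb; rewrite -eyw; have := dxor HA x y; rewrite hxy mul1r => ->.
    have [z [hxz hyz]] := ex_common hxy.
    have := hc (vX z); Ys; rewrite hxz hyz => /(_ erefl) hwz.
    have := hc (vX' z); Ys; rewrite (negbTE (neq_of hxz)) (negbTE (neq_of hyz)) hxz hyz.
    move=> /(_ erefl) hzw.
    by have := dxor HA w z; rewrite -hwz -hzw mul1r.
- have [y hxy] := ex_out x.
  have hy1 : Y (vX' x) (vX y) = 1 by Ys.
  have [b [hb hc]] := P (vX y) hy1.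
  have nxy := neq_of hxy.
  case: (vcase b) hb hc => [[w ->]|[->|[w ->]]]; Ys => hb hc.
  + case: (eqVneq w x) => [ewx|nwx].
      by move: hc; rewrite ewx => /(_ (vX y)); Ys; rewrite hxy (d00 HA) => /(_ erefl).
    rewrite (negbTE nwx) add0r in hb.
    have := hc (vX y); Ys; rewrite hxy (d00 HA) => /(_ erefl) hwy.
    have hyw : A y w = 1.
      have := dtour HA y w; rewrite -hwy addr0.
      case: (eqVneq y w) => [eyw|//].
      by move: hb; rewrite -eyw; have := dxor HA x y; rewrite hxy mul1r => ->.
    have [z [nzx [hwz hzy]]] := ex_path hb hxy hyw.
    have hyz : A y z = 0 by rewrite -[RHS](dxor HA z y) hzy mul1r.
    have nzy := neq_of hzy.
    case: (d01 HA x z) => hxz.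
    * have hzx : A z x = 1.
        by have := dtour HA z x; rewrite nzx hxz addr0.
      have := hc (vX' z); Ys; rewrite hzx eq_sym (negbTE nzy) hyz.
      by rewrite (negbTE (neq_of hwz)) hwz => /(_ erefl).
    * by have := hc (vX z); Ys; rewrite hxz hyz hwz => /(_ erefl).
  + by [].
  + by have := hc (vI m); Ys => /(_ erefl).
Qed.

Lemma Pv_aut (s : {perm 'I_(2 * m + 1)}) v :
  (forall u w, Y (s u) (s w) = Y u w) -> Pv v -> Pv (s v).
Proof.
move=> Hs P a ha.
have ha0 : Y v ((s^-1)%g a) = 1 by rewrite -Hs permKV.
have [b0 [hb0 hc0]] := P _ ha0.
exists (s b0); split; first by rewrite Hs.
move=> c hc.
have hc1 : Y v ((s^-1)%g c) = 1 by rewrite -Hs permKV.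
have := hc0 _ hc1.
by rewrite -(Hs ((s^-1)%g a)) -(Hs b0) !permKV.
Qed.

Lemma aut_fix_inf (s : {perm 'I_(2 * m + 1)}) :
  (forall u w, Y (s u) (s w) = Y u w) -> s (vI m) = vI m.
Proof. by move=> Hs; apply: P_only; apply: Pv_aut => //; exact: P_inf. Qed.

End Inv.


Definition extf m (t : {perm 'I_m}) (u : 'I_(2 * m + 1)) : 'I_(2 * m + 1) :=
  if @insub _ (fun k => (k < m)%N) 'I_m (val u) is Some i then vX (t i)
  else if val u == m then vI m
  else if @insub _ (fun k => (k < m)%N) 'I_m (val u - m.+1)%N is Some i then vX' (t i)
  else u.

Lemma insub_ord m (i : 'I_m) : @insub _ (fun k => (k < m)%N) 'I_m i = Some i.
Proof. rewrite (insubT (fun k => (k < m)%N) (ltn_ord i)); congr Some; exact: val_inj. Qed.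

Lemma extfX m (t : {perm 'I_m}) i : extf t (vX i) = vX (t i).
Proof. by rewrite /extf /= insub_ord. Qed.
Lemma extfI m (t : {perm 'I_m}) : extf t (vI m) = vI m.
Proof. by rewrite /extf /= insubF ?ltnn ?eqxx. Qed.
Lemma extfX' m (t : {perm 'I_m}) i : extf t (vX' i) = vX' (t i).
Proof.
rewrite /extf /= insubF; last by apply/negbTE; rewrite -leqNgt; lia.
have -> : (m.+1 + i == m) = false by lia.
by rewrite addKn insub_ord.
Qed.

Lemma vX_inj m : injective (@vX m).
Proof. by move=> i j /(congr1 val) /= h; apply: val_inj. Qed.
Lemma vX'_inj m : injective (@vX' m).
Proof. by move=> i j /(congr1 val) /= /eqP; rewrite eqn_add2l => /eqP h; apply: val_inj. Qed.

Lemma extf_inj m (t : {perm 'I_m}) : injective (extf t).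
Proof.
move=> u v.
case: (vcase u) => [[i ->]|[->|[i ->]]]; case: (vcase v) => [[j ->]|[->|[j ->]]];
rewrite ?(extfX, extfI, extfX') => // h;
try (by move: h => /eqP; rewrite ?(eXX, eX'X', eXI, eIX, eXX', eX'X, eIX', eX'I)).
- by move/vX_inj/perm_inj: h => ->.
- by move/vX'_inj/perm_inj: h => ->.
Qed.

Definition ext m (t : {perm 'I_m}) : {perm 'I_(2 * m + 1)} := perm (@extf_inj m t).

Lemma extX m (t : {perm 'I_m}) i : ext t (vX i) = vX (t i).
Proof. by rewrite permE extfX. Qed.
Lemma extI m (t : {perm 'I_m}) : ext t (vI m) = vI m.
Proof. by rewrite permE extfI. Qed.
Lemma extX' m (t : {perm 'I_m}) i : ext t (vX' i) = vX' (t i).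
Proof. by rewrite permE extfX'. Qed.

Lemma extM m (t1 t2 : {perm 'I_m}) : ext (t1 * t2)%g = (ext t1 * ext t2)%g.
Proof.
apply/permP => u; rewrite permM.
case: (vcase u) => [[i ->]|[->|[i ->]]]; by rewrite ?(extX, extI, extX') ?permM.
Qed.

Lemma ext1 m : ext (1%g : {perm 'I_m}) = 1%g.
Proof.
apply/permP => u; rewrite perm1.
case: (vcase u) => [[i ->]|[->|[i ->]]]; by rewrite ?(extX, extI, extX') ?perm1.
Qed.

Lemma ext_inj1 m (t : {perm 'I_m}) : ext t = 1%g -> t = 1%g.
Proof.
move=> h; apply/permP => i; rewrite perm1; apply: vX_inj.
by rewrite -extX h perm1.
Qed.

Section Iso.
Variables (m : nat) (A : 'M[int]_m) (l : int).
Hypothesis HA : drt A l.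
Local Notation Y := (B1 1%:M A A^T).
Local Notation AutY := (AutS (fam3 1%:M Y Y^T)).
Local Notation AutX := (AutS (fam3 1%:M A A^T)).

Ltac Ys := rewrite ?(YXX, YXI, YXX'e, YIX, YII, YIX', YX'X, YX'I, YX'X'e).

Lemma row_inj w v : (forall z, A w z = A v z) -> w = v.
Proof.
move=> h.
have := sym1 HA w v.
have -> : \sum_z A w z * A v z = \sum_z A w z.
  by apply: eq_bigr => z _; rewrite -h; case: (d01 HA w z) => ->.
rewrite (drow HA) (dtour HA).
case: (eqVneq w v) => // _ /= /eqP.
have := dl HA; lia.
Qed.

Lemma ext_aut (t : {perm 'I_m}) : t \in AutX -> ext t \in AutY.
Proof.
move/inAut3 => Ht; apply/inAut3 => u v.
case: (vcase u) => [[i ->]|[->|[i ->]]]; case: (vcase v) => [[j ->]|[->|[j ->]]];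
rewrite ?(extX, extI, extX'); Ys; rewrite ?Ht //.
by rewrite (inj_eq perm_inj).
Qed.

Lemma aut_ext (s : {perm 'I_(2 * m + 1)}) :
  s \in AutY -> exists2 t, t \in AutX & s = ext t.
Proof.
move/inAut3 => Hs.
have sI := aut_fix_inf HA Hs.
have hX : forall i, exists j, s (vX i) = vX j.
  move=> i; have := Hs (vI m) (vX i); rewrite sI; Ys.
  by case: (vcase (s (vX i))) => [[j ->]|[->|[j ->]]]; Ys => //; exists j.
pose r i := insubd i (val (s (vX i))) : 'I_m.
have hr : forall i, s (vX i) = vX (r i).
  move=> i; have [j hj] := hX i.
  by apply: val_inj; rewrite /r /= hj val_insubd /= ltn_ord.
have r_inj : injective r.
  by move=> i j e; apply: vX_inj; apply: (@perm_inj _ s); rewrite !hr e.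
pose t := perm r_inj.
have ht : forall i, s (vX i) = vX (t i) by move=> i; rewrite permE hr.
have tA : forall i j, A (t i) (t j) = A i j.
  by move=> i j; rewrite -(YXX 1%:M A A^T) -!ht Hs YXX.
have hX' : forall i, s (vX' i) = vX' (t i).
  move=> i.
  have [w hw] : exists w, s (vX' i) = vX' w.
    have := Hs (vX' i) (vI m); rewrite sI; Ys.
    by case: (vcase (s (vX' i))) => [[j ->]|[->|[j ->]]]; Ys => //; exists j.
  rewrite hw; congr vX'; apply: row_inj => z.
  rewrite -(permKV t z) tA.
  by rewrite -(YX'X 1%:M A A^T) -hw -ht Hs YX'X.
exists t; first by apply/inAut3.
apply/permP => u.
case: (vcase u) => [[i ->]|[->|[i ->]]]; by rewrite ?(extX, extI, extX') ?ht ?hX'.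
Qed.

Lemma isog_XY : AutX \isog AutY.
Proof.
apply: (@misom_isog _ _ _ _ (@ext m)).
apply/andP; split.
  by apply/morphicP => x y _ _; rewrite extM.
apply/eqP/setP => s; apply/imsetP/idP.
- case=> t; rewrite !in_setD1 => /andP [nt tX] ->.
  rewrite ext_aut // andbT; apply: contra nt => /eqP /ext_inj1 ->; by [].
- rewrite !in_setD1 => /andP [ns sY].
  have [t tX e] := aut_ext sY.
  exists t => //; rewrite !in_setD1 tX andbT; apply: contra ns => /eqP et.
  by rewrite e et ext1.
Qed.

Lemma isog_YX : AutY \isog AutX.
Proof.
exact: (@isog_symr _ _ (Group (AutS_group (fam3 1%:M A A^T)))
                        (Group (AutS_group (fam3 1%:M Y Y^T))) isog_XY).
Qed.

End Iso.


Lemma orb_inv N (G : {group {perm 'I_N}}) x y (g : {perm 'I_N}) u v : g \in G ->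
  ((g u, g v) \in [set ((h : {perm 'I_N}) x, h y) | h in G]) =
  ((u, v) \in [set ((h : {perm 'I_N}) x, h y) | h in G]).
Proof.
move=> gG; apply/imsetP/imsetP => [[h hG [e1 e2]] | [h hG [e1 e2]]].
- exists (h * g^-1)%g; first by rewrite groupM ?groupV.
  by rewrite !permM -e1 -e2 !permK.
- exists (h * g)%g; first by rewrite groupM.
  by rewrite !permM e1 e2.
Qed.

Lemma not_schurian N d (F : 'I_d.+1 -> 'M[int]_N) :
  ~ transitive_on_points (AutS F) -> ~ schurian F.
Proof.
move=> ntr [G [Gtr Horb _]]; apply: ntr => x y.
have [g gG e] := Gtr x y; exists g => //.
apply/inAutS => i u v.
have [a [b ->]] := Horb i.
by rewrite !mxE orb_inv.
Qed.

Theorem theorem4 (m : nat) (A0 A1 A2 : 'M[int]_m) :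
  (7 <= m)%N ->
  nonsym_class2 A0 A1 A2 ->
  let Y1 := B1 A0 A1 A2 in
  [/\ nonsym_class2 (1%:M) Y1 Y1^T,
      ~ transitive_on_points (AutS (fam3 (1%:M) Y1 Y1^T)),
      ~ schurian (fam3 (1%:M) Y1 Y1^T) &
      AutS (fam3 (1%:M) Y1 Y1^T) \isog AutS (fam3 A0 A1 A2)].
Proof.
move=> m7 H.
have [e0 e2 [l HA]] := from_scheme m7 H.
subst A0 A2.
move=> Y1; rewrite /Y1.
have m0 : (0 < m)%N by lia.
pose i0 : 'I_m := Ordinal m0.
have ntr : ~ transitive_on_points (AutS (fam3 1%:M (B1 1%:M A1 A1^T) (B1 1%:M A1 A1^T)^T)).
  move=> Htr; have [g gY e] := Htr (vI m) (vX i0).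
  move/inAut3: gY => gY.
  have := aut_fix_inf HA gY; rewrite e => /eqP; by rewrite eXI.
split => //.
- apply: (@tour_scheme _ _ _ _ _ (Y01 HA) (Ytour HA) (Yrow HA) (Ycol HA) (Ysq HA) (vI m) (vX i0)).
  by rewrite YIX.
- exact: not_schurian.
- exact: isog_YX HA.
Qed.
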